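(* Let $P=\{p_1,\dots,p_n\}\subset\mathbb{R}^d$, and let $1\le l\le k$ be integers. Let $P^{(l)}$ be the colored multiset obtained by taking, for each $i$, $l$ copies $p_i^1,\dots,p_i^l$ of $p_i$, all of color $i$. Then for any $\lambda\ge1$ and any $k$ points $\mathcal{C}=\{c_1,\dots,c_k\}\subset\mathbb{R}^d$: $\mathcal{C}$ is a $\lambda$-approximate solution of $(l,k)$-FMeans on $P$ if and only if $\mathcal{C}$, used as the $k$ centers, induces a $\lambda$-approximate solution of $k$-ChMeans on $P^{(l)}$.
   Context: Fault tolerant $k$-means, $(l,k)$-FMeans: find $k$ points $\mathcal{C}\subset\mathbb{R}^d$ minimizing $\frac1n\sum_{i=1}^n$ (sum of the squared distances from $p_i$ to its $l$ nearest points of $\mathcal{C}$); $\mathcal{C}$ is $\lambda$-approximate if its cost is at most $\lambda$ times the minimum. Chromatic $k$-means, $k$-ChMeans, on a colored multiset $Q$ of $N$ points: partition $Q$ into $k$ clusters with no two points of the same color in the same cluster, minimizing $\frac1N\sum_j\sum_{q\in S_j}\|q-m(S_j)\|^2$ ($m(S_j)$ the mean). The $k$-ChMeans cost induced by centers $c_1,\dots,c_k$ is the minimum, over all assignments of the points of $Q$ to centers such that no two points of the same color go to the same center, of $\frac1N\sum_{q}\|q-c_{\text{assigned}(q)}\|^2$; it induces a $\lambda$-approximate solution if this cost is at most $\lambda$ times the optimal $k$-ChMeans value of $Q$. *)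

(* Defs.v *)
From HB Require Import structures.
From mathcomp Require Import all_boot all_order all_algebra.
From mathcomp Require Import boolp classical_sets reals.
Set Implicit Arguments. Unset Strict Implicit. Unset Printing Implicit Defensive.
Import Order.TTheory GRing.Theory Num.Theory.
Local Open Scope ring_scope.
Local Open Scope classical_set_scope.

Section Defs.
Variables (R : realType) (d : nat).

Definition sqdist (x y : 'rV[R]_d) : R := \sum_(i < d) (x ord0 i - y ord0 i) ^+ 2.

(* sum of squared distances from x to its l nearest points among the k centers
   (counted with multiplicity: minimum over l-element index sets of centers) *)
Definition l_nearest_cost (l k : nat) (C : 'I_k -> 'rV[R]_d) (x : 'rV[R]_d) : R :=
  inf [set s | exists S : {set 'I_k}, #|S| = l /\ s = \sum_(j in S) sqdist x (C j)].

Definition fmeans_cost (n l k : nat) (P : 'I_n -> 'rV[R]_d) (C : 'I_k -> 'rV[R]_d) : R :=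
  (n%:R)^-1 * \sum_(i < n) l_nearest_cost l C (P i).

Definition fmeans_opt (n l k : nat) (P : 'I_n -> 'rV[R]_d) : R :=
  inf [set s | exists C : 'I_k -> 'rV[R]_d, s = fmeans_cost l P C].

Definition fmeans_approx (n l k : nat) (P : 'I_n -> 'rV[R]_d) (C : 'I_k -> 'rV[R]_d)
    (lam : R) : Prop :=
  fmeans_cost l P C <= lam * fmeans_opt l k P.

(* a colored multiset Q: elements indexed by a finite type T, with positions q
   and colors col; N = #|T|. *)
Variables (T : finType) (Col : eqType) (q : T -> 'rV[R]_d) (col : T -> Col).

Definition chromatic (k : nat) (a : T -> 'I_k) : Prop :=
  forall x y, x != y -> col x = col y -> a x != a y.

Definition mean (S : {set T}) : 'rV[R]_d := (#|S|%:R)^-1 *: \sum_(x in S) q x.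

Definition cluster (k : nat) (a : T -> 'I_k) (j : 'I_k) : {set T} := [set x | a x == j].

Definition chmeans_part_cost (k : nat) (a : T -> 'I_k) : R :=
  (#|T|%:R)^-1 * \sum_(j < k) \sum_(x in cluster a j) sqdist (q x) (mean (cluster a j)).

Definition chmeans_opt (k : nat) : R :=
  inf [set s | exists a : T -> 'I_k, chromatic a /\ s = chmeans_part_cost a].

Definition chmeans_induced_cost (k : nat) (C : 'I_k -> 'rV[R]_d) : R :=
  inf [set s | exists a : T -> 'I_k, chromatic a /\
                 s = (#|T|%:R)^-1 * \sum_(x : T) sqdist (q x) (C (a x))].

Definition chmeans_induced_approx (k : nat) (C : 'I_k -> 'rV[R]_d) (lam : R) : Prop :=
  chmeans_induced_cost C <= lam * chmeans_opt k.

End Defs.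

(* P^(l): for each i, l copies p_i^1..p_i^l of p_i, all of color i *)
Definition rep_points (R : realType) (d n l : nat) (P : 'I_n -> 'rV[R]_d)
  : ('I_n * 'I_l)%type -> 'rV[R]_d := fun x => P x.1.
Definition rep_color (n l : nat) : ('I_n * 'I_l)%type -> 'I_n := fun x => x.1.

(* Main.v *)
Require Import Defs.
From HB Require Import structures.
From mathcomp Require Import all_boot all_order all_algebra.
From mathcomp Require Import boolp classical_sets reals.
From mathcomp Require Import ring lra.
Import Order.TTheory GRing.Theory Num.Theory.
Set Implicit Arguments. Unset Strict Implicit. Unset Printing Implicit Defensive.
Local Open Scope ring_scope.

Section H.
Variables (R : realType) (d : nat).

Lemma sqdist_ge0 (x y : 'rV[R]_d) : 0 <= sqdist x y.
Proof. by apply: sumr_ge0 => i _; apply: sqr_ge0. Qed.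

Lemma lnc_le (l k : nat) (C : 'I_k -> 'rV[R]_d) x (S : {set 'I_k}) :
  #|S| = l -> l_nearest_cost l C x <= \sum_(j in S) sqdist x (C j).
Proof.
move=> HS; apply: ge_inf; last by exists S.
exists 0 => s [S' [_ ->]]; apply: sumr_ge0 => j _; exact: sqdist_ge0.
Qed.

Lemma lnc_attained (l k : nat) (C : 'I_k -> 'rV[R]_d) x : (l <= k)%N ->
  exists S : {set 'I_k}, #|S| = l /\ l_nearest_cost l C x = \sum_(j in S) sqdist x (C j).
Proof.
move=> lk.
pose S0 : {set 'I_k} := [set j : 'I_k | (j < l)%N].
have cS0 : #|S0| == l.
  have winj : injective (widen_ord lk) by move=> i j e; apply: val_inj; exact: (congr1 val e).
  suff -> : S0 = [set widen_ord lk i | i in 'I_l] by rewrite card_imset // card_ord.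
  apply/setP => j; rewrite !inE.
  apply/idP/imsetP => [jl|[i _ ->]]; last by rewrite /= ltn_ord.
  by exists (Ordinal jl) => //; apply: val_inj.
case: (@arg_minP _ _ _ S0 (fun S : {set 'I_k} => #|S| == l) (fun S : {set 'I_k} => \sum_(j in S) sqdist x (C j)) cS0)
  => S /eqP cS Smin.
exists S; split => //; apply/eqP; rewrite eq_le lnc_le //=.
apply: lb_le_inf; first by exists (\sum_(j in S) sqdist x (C j)), S.
move=> s [S' [cS' ->]]; apply: Smin; exact/eqP.
Qed.

Lemma lnc_ge0 (l k : nat) (C : 'I_k -> 'rV[R]_d) x : (l <= k)%N ->
  0 <= l_nearest_cost l C x.
Proof.
move=> lk; have [S [_ ->]] := lnc_attained C x lk.
apply: sumr_ge0 => j _; exact: sqdist_ge0.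
Qed.

End H.
Lemma mean_min (R : realType) (d : nat) (T : finType) (q : T -> 'rV[R]_d) (S : {set T}) c :
  \sum_(x in S) sqdist (q x) (mean q S) <= \sum_(x in S) sqdist (q x) c.
Proof.
rewrite /sqdist exchange_big [X in _ <= X]exchange_big /=.
apply: ler_sum => i _.
set m := mean q S ord0 i.
have mE : m = (#|S|%:R)^-1 * \sum_(x in S) q x ord0 i.
  by rewrite /m /mean !mxE summxE.
have key : \sum_(x in S) (q x ord0 i - m) = 0.
  rewrite sumrB sumr_const -mulr_natr mE.
  have [S0|Sn0] := eqVneq #|S| 0%N.
    by rewrite S0 mulr0 subr0; apply: big1 => x xS; move/eqP: S0; rewrite cards_eq0 => /eqP S0; rewrite S0 inE in xS.
  by rewrite mulrC mulrA mulfV ?mul1r ?subrr // pnatr_eq0.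
have -> : \sum_(x in S) (q x ord0 i - c ord0 i) ^+ 2 =
   \sum_(x in S) ((q x ord0 i - m) ^+ 2 + (2 * (m - c ord0 i)) * (q x ord0 i - m) + (m - c ord0 i) ^+ 2).
  by apply: eq_bigr => x _; ring.
rewrite !big_split /= -mulr_sumr key mulr0 addr0 lerDl.
by apply: sumr_ge0 => x _; apply: sqr_ge0.
Qed.

Lemma part_eq (R : realType) (d : nat) (T : finType)
  (q : T -> 'rV[R]_d) (k : nat) (a : T -> 'I_k) (C : 'I_k -> 'rV[R]_d) :
  \sum_(j < k) \sum_(x in cluster a j) sqdist (q x) (C j) =
  \sum_(x : T) sqdist (q x) (C (a x)).
Proof.
rewrite (partition_big a predT) //=; apply: eq_bigr => j _.
by apply: eq_big => x; rewrite /cluster inE // => /eqP ->.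
Qed.

Lemma part_le (R : realType) (d : nat) (T : finType)
  (q : T -> 'rV[R]_d) (k : nat) (a : T -> 'I_k) (C : 'I_k -> 'rV[R]_d) :
  chmeans_part_cost q a <=
  (#|T|%:R)^-1 * \sum_(x : T) sqdist (q x) (C (a x)).
Proof.
rewrite /chmeans_part_cost; apply: ler_wpM2l; first by rewrite invr_ge0 ler0n.
rewrite -part_eq; apply: ler_sum => j _; exact: mean_min.
Qed.

Lemma part_eq2 (R : realType) (d : nat) (T : finType)
  (q : T -> 'rV[R]_d) (k : nat) (a : T -> 'I_k) :
  chmeans_part_cost q a =
  (#|T|%:R)^-1 * \sum_(x : T) sqdist (q x) (mean q (cluster a (a x))).
Proof.
by rewrite /chmeans_part_cost (part_eq q a (fun j => mean q (cluster a j))).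
Qed.

Section Main.
Variables (R : realType) (d n l k : nat) (P : 'I_n -> 'rV[R]_d).
Hypothesis lk : (l <= k)%N.
Hypothesis l1 : (1 <= l)%N.

Notation q := (@rep_points R d n l P).
Notation col := (@rep_color n l).

Lemma chrom_ge (C : 'I_k -> 'rV[R]_d) (a : ('I_n * 'I_l)%type -> 'I_k) :
  chromatic col a ->
  \sum_i l_nearest_cost l C (P i) <= \sum_(x : ('I_n * 'I_l)%type) sqdist (q x) (C (a x)).
Proof.
move=> ch.
have -> : \sum_(x : ('I_n * 'I_l)%type) sqdist (q x) (C (a x)) =
   \sum_i \sum_(t : 'I_l) sqdist (P i) (C (a (i, t))).
  by rewrite (pair_bigA _ (fun i t => sqdist (P i) (C (a (i, t))))); apply: eq_bigr => -[i t].
apply: ler_sum => i _.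
have finj : injective (fun t => a (i, t)).
  move=> t t' e; apply/eqP; apply/negPn/negP => ne.
  have : (i, t) != (i, t') by rewrite xpair_eqE negb_and ne orbT.
  by move=> /ch /(_ erefl); rewrite e eqxx.
have := @lnc_le R d l k C (P i) [set a (i, t) | t in 'I_l].
rewrite card_imset // card_ord => /(_ erefl).
by rewrite big_imset //; move=> ? ? ? ?; apply: finj.
Qed.

Lemma chrom_att (C : 'I_k -> 'rV[R]_d) :
  exists a : ('I_n * 'I_l)%type -> 'I_k, chromatic col a /\
  \sum_(x : ('I_n * 'I_l)%type) sqdist (q x) (C (a x)) = \sum_i l_nearest_cost l C (P i).
Proof.
have H : forall i, exists f : 'I_l -> 'I_k, injective f /\
    \sum_(t : 'I_l) sqdist (P i) (C (f t)) = l_nearest_cost l C (P i).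
  move=> i; have [S [cS ->]] := lnc_attained C (P i) lk.
  pose f (t : 'I_l) : 'I_k := enum_val (cast_ord (esym cS) t).
  have finj : injective f.
    by move=> t t' /enum_val_inj /(congr1 val) /= e; apply: val_inj.
  exists f; split => //.
  have -> : S = [set f t | t in 'I_l].
    apply/eqP; rewrite eq_sym eqEcard card_imset // card_ord cS leqnn andbT.
    by apply/fintype.subsetP => j /imsetP [t _ ->]; apply: enum_valP.
  by rewrite big_imset //; move=> ? ? ? ?; apply: finj.
have [F HF] := choice H.
exists (fun x => F x.1 x.2); split.
  move=> [i t] [i' t'] ne /= e; rewrite /rep_color /= in e; subst i'.
  apply/negP => /eqP /(proj1 (HF i)) ett; move: ne; rewrite ett eqxx //.
have -> : \sum_(x : ('I_n * 'I_l)%type) sqdist (q x) (C (F x.1 x.2)) = \sum_i \sum_(t : 'I_l) sqdist (P i) (C (F i t)) by rewrite (pair_bigA _ (fun i t => sqdist (P i) (C (F i t)))).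
apply: eq_bigr => i _; exact: (proj2 (HF i)).
Qed.

Lemma induced_eq (C : 'I_k -> 'rV[R]_d) :
  chmeans_induced_cost q col C = (l%:R)^-1 * fmeans_cost l P C.
Proof.
rewrite /fmeans_cost mulrA -invfM -natrM mulnC.
have cT : #|{: 'I_n * 'I_l}| = (n * l)%N by rewrite card_prod !card_ord.
have [a [cha ea]] := chrom_att C.
rewrite /chmeans_induced_cost; apply/eqP; rewrite eq_le; apply/andP; split.
  apply: ge_inf; last by exists a; split => //; rewrite ea cT.
  exists 0 => s [b [_ ->]]; apply: mulr_ge0; first by rewrite invr_ge0 ler0n.
  by apply: sumr_ge0 => x _; apply: sqdist_ge0.
apply: lb_le_inf; first by exists ((#|{: 'I_n * 'I_l}|%:R)^-1 * \sum_(x : ('I_n * 'I_l)%type) sqdist (q x) (C (a x))), a.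
move=> s [b [chb ->]]; rewrite cT; apply: ler_wpM2l; first by rewrite invr_ge0 ler0n.
exact: chrom_ge.
Qed.

Lemma fmeans_ge0 (C : 'I_k -> 'rV[R]_d) : 0 <= fmeans_cost l P C.
Proof.
apply: mulr_ge0; first by rewrite invr_ge0 ler0n.
by apply: sumr_ge0 => i _; apply: lnc_ge0.
Qed.

Lemma opt_eq : chmeans_opt q col k = (l%:R)^-1 * fmeans_opt l k P.
Proof.
have lpos : 0 < (l%:R : R) by rewrite ltr0n.
have part_ge0 : forall a : ('I_n * 'I_l)%type -> 'I_k, 0 <= chmeans_part_cost q a.
  move=> a; apply: mulr_ge0; first by rewrite invr_ge0 ler0n.
  by apply: sumr_ge0 => j _; apply: sumr_ge0 => x _; apply: sqdist_ge0.
apply/eqP; rewrite eq_le; apply/andP; split.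
  rewrite -(ler_pM2l lpos) mulrA mulfV ?mul1r; last by rewrite gt_eqF.
  apply: lb_le_inf; first by exists (fmeans_cost l P (fun _ : 'I_k => 0 : 'rV[R]_d)), (fun _ : 'I_k => 0 : 'rV[R]_d).
  move=> s [C ->].
  have [a [cha ea]] := chrom_att C.
  have e2 : fmeans_cost l P C = l%:R * chmeans_induced_cost q col C.
    by rewrite induced_eq mulrA mulfV ?mul1r // gt_eqF.
  rewrite e2 ler_pM2l //.
  apply: (@le_trans _ _ (chmeans_part_cost q a)).
    apply: ge_inf; last by exists a.
    by exists 0 => s' [b [_ ->]]; apply: part_ge0.
  apply: le_trans (part_le q a C) _.
  rewrite induced_eq /fmeans_cost mulrA -invfM -natrM mulnC -ea card_prod !card_ord //.
apply: lb_le_inf.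
  have [a [cha _]] := chrom_att (fun=> 0).
  by exists (chmeans_part_cost q a), a.
move=> s [a [cha ->]].
pose C' := fun j => mean q (cluster a j).
rewrite part_eq2.
apply: (@le_trans _ _ (chmeans_induced_cost q col C')).
  rewrite induced_eq; apply: ler_wpM2l; first by rewrite invr_ge0 ler0n.
  apply: ge_inf; last by exists C'.
  by exists 0 => s' [C ->]; apply: fmeans_ge0.
apply: ge_inf; last by exists a.
exists 0 => s' [b [_ ->]]; apply: mulr_ge0; first by rewrite invr_ge0 ler0n.
by apply: sumr_ge0 => x _; apply: sqdist_ge0.
Qed.

End Main.

Theorem lemma9 (R : realType) (d n l k : nat) (P : 'I_n -> 'rV[R]_d) :
  (1 <= l)%N -> (l <= k)%N ->
  forall (lam : R), 1 <= lam ->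
  forall C : 'I_k -> 'rV[R]_d,
    @fmeans_approx R d n l k P C lam <->
    @chmeans_induced_approx R d ('I_n * 'I_l)%type 'I_n
      (@rep_points R d n l P) (@rep_color n l) k C lam.
Proof.
move=> l1 lk lam _ C.
rewrite /fmeans_approx /chmeans_induced_approx induced_eq // opt_eq //.
have lpos : 0 < ((l%:R)^-1 : R) by rewrite invr_gt0 ltr0n.
by rewrite [X in _ <-> _ <= X]mulrCA ler_pM2l.
Qed.
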